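(* Let $G$ be a graph on $[n]$ such that every $3$-subset of $[n]$ contains an edge of $G$. Then $E(G)$ dominates $B(n)$, where $B(n)=\{\{a,b\}: 1\le a<b\le n,\ a+b\le n\}$.
   Context: Let $X=(x_{ij})_{1\le i,j\le n}$ be a matrix of $n^2$ independent indeterminates over $\mathbb{Q}$, and for $1\le k\le n$ let $C_k(X)=(c_{S,T})$ be its $k$-th compound matrix: rows and columns are indexed by $k$-subsets $S,T$ of $[n]$, and $c_{S,T}=\det(x_{ij})_{i\in S,j\in T}$, computed in the field $\mathbb{Q}(x_{ij})$. For two families $F_1,F_2$ of $k$-subsets of $[n]$, $F_1$ dominates $F_2$ if the submatrix of $C_k(X)$ with rows indexed by $F_2$ and columns indexed by $F_1$ has rank $|F_2|$. A graph is identified with its set of edges, a family of $2$-subsets. *)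

(* Defs.v *)
From HB Require Import structures.
From mathcomp Require Import all_boot all_order all_algebra.
Set Implicit Arguments. Unset Strict Implicit. Unset Printing Implicit Defensive.
Import Order.TTheory GRing.Theory Num.Theory.
Local Open Scope ring_scope.

(* Polynomial ring over Q in k indeterminates, built as iterated
   univariate polynomial rings: mpoly 0 = Q, mpoly (k+1) = (mpoly k)[Y]. *)
Fixpoint mpoly (k : nat) : idomainType :=
  match k with
  | 0 => rat
  | k'.+1 => {poly (mpoly k')}
  end.

Fixpoint mvar (k : nat) : nat -> mpoly k :=
  match k return nat -> mpoly k with
  | 0 => fun _ => 0
  | k'.+1 => fun i => if i == k' then ('X : {poly mpoly k'})
                      else ((mvar k' i)%:P : {poly mpoly k'})
  end.

Definition nvars (n : nat) : nat := #|{: 'I_n * 'I_n}|.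

Definition Kfield (n : nat) : fieldType := {fraction (mpoly (nvars n))}.

Definition genX (n : nat) : 'M[Kfield n]_n :=
  \matrix_(i, j) tofrac (mvar (nvars n) (enum_rank (i, j))).

Definition Xnat (n : nat) (a b : nat) : Kfield n :=
  match @insub nat (fun m => m < n)%N 'I_n a, @insub nat (fun m => m < n)%N 'I_n b with
  | Some i, Some j => genX n i j
  | _, _ => 0
  end.

(* Entry c_{S,T} of the k-th compound matrix: det of the submatrix of X
   with rows in S and columns in T (elements listed increasingly). *)
Definition compound_entry (n k : nat) (S T : {set 'I_n}) : Kfield n :=
  \det (\matrix_(i < k, j < k)
          Xnat n (nth 0%N [seq val x | x <- enum S] i)
                 (nth 0%N [seq val x | x <- enum T] j)).

(* F1 dominates F2 (families of k-subsets of [n]): the submatrix of C_k(X)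
   with rows F2 and columns F1 has rank |F2|. *)
Definition dominates (n k : nat) (F1 F2 : {set {set 'I_n}}) : bool :=
  \rank (\matrix_(i < #|F2|, j < #|F1|)
           @compound_entry n k (enum_val i) (enum_val j)) == #|F2|.

(* B(n) = {{a,b} : 1 <= a < b <= n, a + b <= n}; ordinals are 0-based,
   so element a : 'I_n stands for a+1. *)
Definition Bn (n : nat) : {set {set 'I_n}} :=
  [set [set p.1; p.2] | p in [pred p : 'I_n * 'I_n | ((p.1 < p.2) && ((p.1).+1 + (p.2).+1 <= n))%N]].

Definition is_graph (n : nat) (E : {set {set 'I_n}}) : Prop :=
  forall e, e \in E -> #|e| = 2%N.

(* Main.v *)
Require Import Defs.
From HB Require Import structures.
From mathcomp Require Import all_boot all_order all_algebra.
From mathcomp Require Import zify.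
Set Implicit Arguments. Unset Strict Implicit. Unset Printing Implicit Defensive.
Import Order.TTheory GRing.Theory Num.Theory.
Local Open Scope ring_scope.

Lemma enum_sorted n (S : {set 'I_n}) : sorted ltn [seq val x | x <- enum S].
Proof.
rewrite -deprecated_filter_index_enum.
apply: (subseq_sorted ltn_trans _ (iota_ltn_sorted 0 n)).
rewrite -val_enum_ord enumT. apply: map_subseq. exact: filter_subseq.
Qed.

Lemma enum2 n (a b : 'I_n) : (a < b)%N -> [seq val x | x <- enum [set a; b]] = [:: val a; val b].
Proof.
move=> ab; apply: (@irr_sorted_eq _ ltn ltn_trans ltnn); [exact: enum_sorted| by rewrite /= ab|].
move=> x; rewrite !inE; apply/mapP/idP.
  by case=> y; rewrite mem_enum !inE => /orP[]/eqP-> ->; rewrite eqxx ?orbT.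
case/orP=> /eqP->; [exists a|exists b]; rewrite // mem_enum !inE eqxx ?orbT //.
Qed.

Lemma det2 (R : comRingType) (A : 'M[R]_2) : \det A = A 0 0 * A 1 1 - A 0 1 * A 1 0.
Proof.
rewrite (expand_det_row _ 0) !big_ord_recl big_ord0 /cofactor !det_mx11 !mxE /=.
have -> : lift (0 : 'I_2) (0 : 'I_1) = 1 by apply/val_inj.
have -> : lift (1 : 'I_2) (0 : 'I_1) = 0 by apply/val_inj.
by rewrite /bump /= add0n addn0 expr0 expr1 mul1r addr0 mulN1r mulrN.
Qed.

Definition ent (R : comRingType) n (x : nat -> nat -> R) (S T : {set 'I_n}) : R :=
  \det (\matrix_(i < 2, j < 2)
          x (nth 0%N [seq val x | x <- enum S] i)
            (nth 0%N [seq val x | x <- enum T] j)).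

Lemma entE (R : comRingType) n (x : nat -> nat -> R) (a b t1 t2 : 'I_n) :
  (a < b)%N -> (t1 < t2)%N ->
  ent x [set a; b] [set t1; t2] = x a t1 * x b t2 - x a t2 * x b t1.
Proof. by move=> ab tt; rewrite /ent det2 !mxE enum2 // enum2. Qed.

Lemma eq_ent (R : comRingType) n (x x' : nat -> nat -> R) (S T : {set 'I_n}) :
  x =2 x' -> ent x S T = ent x' S T.
Proof. by move=> e; rewrite /ent; congr (\det _); apply/matrixP => i j; rewrite !mxE e. Qed.

Lemma entM (R R' : comRingType) (f : {rmorphism R -> R'}) n (x : nat -> nat -> R)
  (S T : {set 'I_n}) : ent (fun a b => f (x a b)) S T = f (ent x S T).
Proof. by rewrite /ent -det_map_mx; congr (\det _); apply/matrixP => i j; rewrite !mxE. Qed.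

Definition Ynat n (y : 'I_n -> 'I_n -> rat) (a b : nat) : rat :=
  match @insub nat (fun m => m < n)%N 'I_n a, @insub nat (fun m => m < n)%N 'I_n b with
  | Some i, Some j => y j i
  | _, _ => 0
  end.

Lemma YnatE n (y : 'I_n -> 'I_n -> rat) (a t : 'I_n) : Ynat y a t = y t a.
Proof. by rewrite /Ynat !valK. Qed.

Lemma sum_delta n (d : 'I_n -> rat) (j : 'I_n) : \sum_a d a * (a == j)%:R = d j.
Proof.
rewrite (bigD1 j) //= eqxx mulr1 big1 ?addr0 // => i /negbTE->; exact: mulr0.
Qed.



Definition inB n (k m : nat) (p : 'I_n * 'I_n) : bool :=
  [&& (k <= p.1)%N, (p.1 < p.2)%N & (p.1 + p.2 + 2 <= k + k + m)%N].

Definition Good n (E : {set {set 'I_n}}) (k : nat) (V : {set 'I_n})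
  (y : 'I_n -> 'I_n -> rat) : Prop :=
 [/\ forall t a, y t a != 0 -> (t \in V) && (k <= a < k + #|V|)%N,
     forall d : 'I_n -> rat, (forall z, z \in V -> \sum_a d a * y z a = 0) ->
        forall a : 'I_n, (k <= a < k + #|V|)%N -> d a = 0 &
     forall c : 'I_n -> 'I_n -> rat,
       (forall e, e \in E -> e \subset V ->
          \sum_(p | inB k #|V| p) c p.1 p.2 * ent (Ynat y) [set p.1; p.2] e = 0) ->
       forall p, inB k #|V| p -> c p.1 p.2 = 0].

Lemma edge2 n (e : {set 'I_n}) : #|e| = 2 -> exists t1 t2 : 'I_n, (t1 < t2)%N /\ e = [set t1; t2].
Proof.
move/eqP/cards2P => [x [x' [xx' ->]]].
case: (ltngtP x x') => [h|h|h]; first by exists x, x'.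
  by exists x', x; rewrite setUC.
by move: xx'; rewrite (val_inj h) eqxx.
Qed.

Lemma sum_edge n (P : pred ('I_n * 'I_n)) (y : 'I_n -> 'I_n -> rat)
  (c : 'I_n -> 'I_n -> rat) (u z : 'I_n) : u != z -> (forall p, P p -> p.1 < p.2)%N ->
  \sum_(p | P p) c p.1 p.2 * ent (Ynat y) [set p.1; p.2] [set u; z] = 0 ->
  \sum_(p | P p) c p.1 p.2 * (y u p.1 * y z p.2 - y z p.1 * y u p.2) = 0.
Proof.
move=> uz HP; case: (ltngtP u z) => [h|h|h].
- by move=> H; rewrite -[RHS]H; apply: eq_bigr => p /HP lt; rewrite entE // !YnatE.
- rewrite setUC => H; apply/eqP; rewrite -oppr_eq0 -sumrN -[X in _ == X]H; apply/eqP.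
  apply: eq_bigr => p /HP lt; rewrite entE // !YnatE -mulrN opprB; congr (_ * _).
- by case/eqP: uz; apply: val_inj.
Qed.

Lemma choose_uw n (E : {set {set 'I_n}}) (HE : is_graph E)
  (H3 : forall T : {set 'I_n}, #|T| = 3 -> exists2 e, e \in E & e \subset T)
  (V : {set 'I_n}) : (1 < #|V|)%N ->
  exists u w, [/\ u \in V, w \in V, u != w &
     forall z, z \in V -> z != u -> z != w -> ([set u; z] \in E) || ([set w; z] \in E)].
Proof.
move=> V2.
case: (boolP [exists u : 'I_n, exists w : 'I_n, [&& u \in V, w \in V, u != w & [set u; w] \notin E]]).
  case/existsP=> u /existsP[w /and4P[uV wV uw uwE]]; exists u, w; split=> // z zV zu zw.
  have c3 : #|[set u; w; z]| = 3.
    rewrite setUC !cardsU1 cards1 !inE negb_or zu zw uw. done.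
  have [e eE eT] := H3 _ c3.
  have [x [x' [xx' ee]]] : exists x y : 'I_n, x != y /\ e = [set x; y].
    by apply/cards2P; rewrite HE.
  subst e; move: eT; rewrite subUset !sub1set !inE => /andP[].
  move=> /orP[/orP[]|] /eqP ex /orP[/orP[]|] /eqP ex'; subst x x';
    rewrite ?eqxx // in xx';
    first [ by rewrite eE ?orbT | by rewrite setUC in eE; rewrite eE ?orbT
          | by rewrite eE in uwE | by rewrite setUC eE in uwE ].
move/existsPn => H.
have [u [w [uV wV uw]]] := card_gt1P V2.
exists u, w; split=> // z zV zu zw; apply/orP; left.
move: (H u) => /existsPn /(_ z); rewrite uV zV eq_sym zu /= negbK; done.
Qed.


Lemma base0 n (E : {set {set 'I_n}}) k (V : {set 'I_n}) : #|V| = 0%N -> exists y, Good E k V y.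
Proof.
move=> cV; exists (fun _ _ => 0); split; rewrite cV.
- by move=> t a; rewrite eqxx.
- by move=> d _ a; lia.
- by move=> c _ p; rewrite /inB; lia.
Qed.

Lemma base1 n (E : {set {set 'I_n}}) k (V : {set 'I_n}) : #|V| = 1%N -> (k < n)%N -> exists y, Good E k V y.
Proof.
move=> cV kn; have [v Vv] : exists v, V = [set v] by apply/cards1P/eqP.
pose k0 := Ordinal kn.
exists (fun t a => ((t == v) && (a == k0))%:R); split; rewrite cV.
- move=> t a; case: andP => [[/eqP -> /eqP ->]|]; rewrite ?eqxx //= Vv inE eqxx /=.
  by move=> _; lia.
- move=> d Hd a Ha; have := Hd v; rewrite Vv inE eqxx => /(_ isT).
  rewrite /=.
  rewrite sum_delta; have -> // : a = k0 by apply/val_inj => /=; lia.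
- by move=> c _ p; rewrite /inB; lia.
Qed.

Lemma step n (E : {set {set 'I_n}}) (HE : is_graph E)
  (H3 : forall T : {set 'I_n}, #|T| = 3 -> exists2 e, e \in E & e \subset T)
  m k (V : {set 'I_n}) :
  (forall k' (V' : {set 'I_n}), #|V'| = m -> (k' + m <= n)%N -> exists y, Good E k' V' y) ->
  #|V| = m.+2 -> (k + m.+2 <= n)%N -> exists y, Good E k V y.
Proof.
move=> IH cV kmn.
have [u [w [uV wV uw cov]]] := choose_uw HE H3 (V:=V) (ltac:(by rewrite cV)).
set V' := V :\ u :\ w.
have V'V : forall z, z \in V' -> [/\ z != w, z != u & z \in V].
  by move=> z; rewrite !inE => /and3P.
have cV' : #|V'| = m.
  move: cV; rewrite (cardsD1 u V) uV (cardsD1 w (V :\ u)) !inE eq_sym uw wV /=.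
  rewrite -/V'; lia.
have [y' [sup' ind' spn']] := IH k.+1 V' cV' (ltac:(lia)).
rewrite cV' in sup' ind' spn'.
have kn : (k < n)%N by lia.
have k1n : (k + m + 1 < n)%N by lia.
pose k0 := Ordinal kn. pose k1 := Ordinal k1n.
have wu : (w == u) = false by rewrite eq_sym (negbTE uw).
pose y t a := if t == u then (a == k0)%:R else if t == w then (a == k0)%:R + (a == k1)%:R
              else y' t a.
have yu : forall a, y u a = (a == k0)%:R by move=> a; rewrite /y eqxx.
have yw : forall a, y w a = (a == k0)%:R + (a == k1)%:R by move=> a; rewrite /y wu eqxx.
have yo : forall t, t != u -> t != w -> y t =1 y' t.
  by move=> t tu tw a; rewrite /y (negbTE tu) (negbTE tw).
clearbody y.
have yV' : forall z, z \in V' -> y z =1 y' z.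
  by move=> z /V'V[zw zu _]; apply: yo.
have y'lo : forall z (a : 'I_n), (a <= k)%N -> y' z a = 0.
  by move=> z a ha; apply/eqP/negP => /negP /sup' /andP[_]; lia.
exists y; split; rewrite cV.
- move=> t a; case: (t =P u) => [->|/eqP tu].
    by rewrite yu; case: (a =P k0) => [-> _|]; [rewrite uV /=; lia | rewrite eqxx].
  case: (t =P w) => [->|/eqP tw].
    rewrite yw; case: (a =P k0) => [-> _|ak0]; first by rewrite wV /=; lia.
    case: (a =P k1) => [-> _|ak1]; first by rewrite wV /=; lia.
    by rewrite addr0 eqxx.
  rewrite yo //.
  move/sup' => /andP[tV' ha]; have [_ _ ->] := V'V t tV'; rewrite /=; lia.
- move=> d Hd a Ha.
  have d0 : d k0 = 0.
    by have := Hd u uV; under eq_bigr do rewrite yu; rewrite sum_delta.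
  have d1 : d k1 = 0.
    have := Hd w wV.
    rewrite (eq_bigr (fun a => d a * (a == k0)%:R + d a * (a == k1)%:R)); last by move=> b _; rewrite yw mulrDr.
    by rewrite big_split /= !sum_delta d0 add0r.
  have dV' : forall z, z \in V' -> \sum_a d a * y' z a = 0.
    move=> z zV'; have [zw zu zV] := V'V z zV'; rewrite -[RHS](Hd z zV).
    by apply: eq_bigr => b _; rewrite yV'.
  case: (eqVneq (a : nat) k) => [ak|ak]; first by rewrite (_ : a = k0) //; apply/val_inj.
  case: (eqVneq (a : nat) (k+m+1)%N) => [ak'|ak']; first by rewrite (_ : a = k1) //; apply/val_inj.
  move: ak ak' => /eqP ak /eqP ak'; apply: (ind' d dV'). lia.
- move=> c Hc.
  have key : forall x z, x \in V -> z \in V' -> x != z ->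
      (forall a : 'I_n, (a <= k + m)%N -> y x a = (a == k0)%:R) ->
      [set x; z] \in E -> \sum_a c k0 a * y' z a = 0.
    move=> x z xV zV' xz yx xzE; have [zw zu zV] := V'V z zV'.
    have := Hc _ xzE; rewrite subUset !sub1set xV zV => /(_ isT).
    have HP : forall p : 'I_n * 'I_n, inB k m.+2 p -> (p.1 < p.2)%N.
      by move=> p; rewrite /inB; case/and3P.
    move/(sum_edge xz HP) => H; rewrite -[RHS]H.
    rewrite (_ : \sum_(p | inB k m.+2 p) c p.1 p.2 * (y x p.1 * y z p.2 - y z p.1 * y x p.2)
       = \sum_i \sum_j (if inB k m.+2 (i, j) then c i j * (y x i * y z j - y z i * y x j) else 0));
      last by rewrite pair_bigA big_mkcond.
    rewrite [RHS](bigD1 k0) //= [X in _ + X]big1 ?addr0 => [|i ik0]; last first.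
      apply: big1 => j _; case: ifP => // /and3P[/= h1 h2 h3].
      rewrite (yx i); last by clear -h2 h3; lia.
      rewrite (yx j); last by clear -h1 h2 h3; lia.
      rewrite (negbTE ik0) (_ : (j == k0) = false); last first.
        by apply/negbTE/eqP => /(congr1 val) /=; clear -h1 h2; lia.
      by rewrite !mul0r mulr0 subrr mulr0.
    apply: eq_bigr => j _; case: ifP => [/and3P[/= h1 h2 h3]|hn].
      rewrite (yx k0); last by clear -h1; rewrite /=; lia.
      rewrite (yx j); last by clear -h1 h2 h3; lia.
      rewrite eqxx (_ : (j == k0) = false); last first.
        by apply/negbTE/eqP => /(congr1 val) /=; clear -h2; lia.
      by rewrite yV' // mul1r mulr0 subr0.
    have -> : y' z j = 0.
      apply/eqP/negP => /negP /sup' /andP[_ hj]; move: hn; rewrite /inB /=.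
      by clear -hj; lia.
    by rewrite mulr0.
  have row : forall b : 'I_n, (k.+1 <= b < k.+1 + m)%N -> c k0 b = 0.
    apply: (ind' (fun a => c k0 a)) => z zV'; have [zw zu zV] := V'V z zV'.
    case/orP: (cov z zV zu zw) => zE.
      by apply: (key u z) => //; try by [rewrite eq_sym | move=> a _; rewrite yu].
    apply: (key w z) => //; try by rewrite eq_sym.
    move=> a ha; rewrite yw (_ : (a == k1) = false) ?addr0 //.
    by apply/negbTE/eqP => /(congr1 val) /=; clear -ha; lia.
  move=> p Hp; case: (eqVneq (p.1 : nat) k) => [pk|pk].
    rewrite (_ : p.1 = k0); last exact: val_inj.
    by apply: row; move: Hp; rewrite /inB; lia.
  apply: spn'; last by move: Hp pk; rewrite /inB => ? /eqP ?; lia.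
  move=> e eE eV'; have [t1 [t2 [t12 ee]]] := edge2 (HE e eE); subst e.
  move: (eV'); rewrite subUset !sub1set => /andP[t1V' t2V'].
  have V'sub : V' \subset V by apply/subsetP => z /V'V[].
  have := Hc _ eE (subset_trans eV' V'sub).
  rewrite (bigID (fun p : 'I_n * 'I_n => (p.1 : nat) == k)) /= big1 ?add0r; last first.
    move=> q /andP[/and3P[_ lt _] /eqP qk].
    rewrite entE // !YnatE !yV' // (y'lo t1 q.1) ?qk // (y'lo t2 q.1) ?qk //.
    by rewrite !mul0r subrr mulr0.
  move=> H; rewrite -[RHS]H; apply: eq_big => q.
    by rewrite /inB; apply/idP/idP => h; lia.
  by move=> /and3P[_ lt _]; rewrite !entE // !YnatE !yV'.
Qed.


Lemma core n (E : {set {set 'I_n}}) (HE : is_graph E)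
  (H3 : forall T : {set 'I_n}, #|T| = 3 -> exists2 e, e \in E & e \subset T) :
  forall m k (V : {set 'I_n}), #|V| = m -> (k + m <= n)%N -> exists y, Good E k V y.
Proof.
elim/ltn_ind => m IH k V cV km.
case: m IH cV km => [|[|m]] IH cV km.
- exact: base0.
- by apply: base1 => //; lia.
- apply: (step HE H3 (m:=m)) => // k' V' cV' km'.
  by apply: (IH m) => //; lia.
Qed.

Fixpoint ev (v : nat -> rat) (k : nat) : {rmorphism mpoly k -> rat} :=
  match k return {rmorphism mpoly k -> rat} with
  | 0 => idfun
  | k'.+1 => (horner_eval (v k') \o map_poly (ev v k'))%FUN
  end.

Lemma ev_mvar v k i : (i < k)%N -> ev v k (mvar k i) = v i.
Proof.
elim: k => // k IH; rewrite ltnS leq_eqVlt => /orP[/eqP->|ltik] /=.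
  by rewrite eqxx horner_evalE map_polyX hornerX.
rewrite (ltn_eqF ltik) horner_evalE map_polyC hornerC; exact: IH.
Qed.

Definition Pnat n (a b : nat) : mpoly (nvars n) :=
  match @insub nat (fun m => m < n)%N 'I_n a, @insub nat (fun m => m < n)%N 'I_n b with
  | Some i, Some j => mvar (nvars n) (enum_rank (i, j))
  | _, _ => 0
  end.

Lemma XnatE n a b : Xnat n a b = tofrac (Pnat n a b).
Proof.
rewrite /Xnat /Pnat; case: (@insub nat (fun m => m < n)%N 'I_n a) => [i|];
  case: (@insub nat (fun m => m < n)%N 'I_n b) => [j|]; rewrite ?tofrac0 //.
by rewrite mxE.
Qed.

Definition vv n (y : 'I_n -> 'I_n -> rat) (r : nat) : rat :=
  match @insub nat (fun m => m < nvars n)%N 'I_(nvars n) r with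
  | Some o => let p := @enum_val _ (pred_of_simpl (@predT ('I_n * 'I_n)%type)) o in y p.2 p.1
  | None => 0
  end.

Lemma evPnat n (y : 'I_n -> 'I_n -> rat) a b : ev (vv y) (nvars n) (Pnat n a b) = Ynat y a b.
Proof.
rewrite /Pnat /Ynat; case: (@insub nat (fun m => m < n)%N 'I_n a) => [i|];
  case: (@insub nat (fun m => m < n)%N 'I_n b) => [j|]; rewrite ?rmorph0 //.
rewrite ev_mvar ?ltn_ord // /vv valK /=.
by rewrite enum_rankK.
Qed.

Definition Mx (R : comRingType) n (E : {set {set 'I_n}}) (x : nat -> nat -> R) :
  'M[R]_(#|Bn n|, #|E|) := \matrix_(i, j) ent x (enum_val i) (enum_val j).

Lemma stepA n (E : {set {set 'I_n}}) (y : 'I_n -> 'I_n -> rat) :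
  (forall v : 'rV[rat]_#|Bn n|, v *m Mx E (Ynat y) = 0 -> v = 0) -> dominates 2 E (Bn n).
Proof.
move=> Hinj.
pose PM := Mx E (@Pnat n).
have HA : Mx E (Ynat y) = map_mx (ev (vv y) (nvars n)) PM.
  apply/matrixP => i j; rewrite !mxE -entM; apply: eq_ent => a b; by rewrite evPnat.
have HM : \matrix_(i < #|Bn n|, j < #|E|) @compound_entry n 2%N (enum_val i) (enum_val j)
          = map_mx (@tofrac (mpoly (nvars n))) PM.
  apply/matrixP => i j; rewrite !mxE -entM.
  by change (ent (Xnat n) (enum_val i) (enum_val j) = ent (fun a b => tofrac (Pnat n a b)) (enum_val i) (enum_val j));
     apply: eq_ent => a b; exact: XnatE.
have detA : \det (Mx E (Ynat y) *m (Mx E (Ynat y))^T) != 0.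
  apply/negP => /det0P [v v0 vA].
  move: vA; set A := Mx E (Ynat y) => vA.
  have wA : v *m A = 0.
    have [w wE] : exists w, w = v *m A by eexists.
    have ww : w *m w^T = 0.
      by rewrite wE trmx_mul mulmxA -(mulmxA v) vA mul0mx.
    rewrite -wE; apply/rowP => j; rewrite mxE.
    have := congr1 (fun M : 'M[rat]_1 => M ord0 ord0) ww; rewrite !mxE => Hs0.
    have Hs : \sum_i w 0 i * w 0 i = 0.
      by rewrite -[RHS]Hs0; apply: eq_bigr => i _; rewrite [w^T _ _]mxE.
    have Hj := @psumr_eq0P _ _ _ (fun i => w 0 i * w 0 i)
       (fun i _ => ltac:(by rewrite /= -expr2 sqr_ge0)) Hs j isT.
    by move/eqP: Hj; rewrite mulf_eq0 orbb => /eqP.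
  by move: v0; rewrite (Hinj v wA) eqxx.
have detP : \det (PM *m PM^T) != 0.
  apply: contraNneq detA => H.
  by rewrite HA map_trmx -map_mxM det_map_mx H rmorph0.
rewrite /dominates HM; apply/eqP/anti_leq/andP; split; first exact: rank_leq_row.
have U : map_mx (@tofrac (mpoly (nvars n))) PM *m (map_mx (@tofrac (mpoly (nvars n))) PM)^T \in unitmx.
  by rewrite unitmxE unitfE map_trmx -map_mxM det_map_mx tofrac_eq0.
apply: leq_trans (mxrankM_maxl _ (map_mx (@tofrac (mpoly (nvars n))) PM)^T).
by rewrite (mxrank_unit U).
Qed.


Local Close Scope ring_scope.

Theorem mainTheorem2 (n : nat) (E : {set {set 'I_n}}) :
  is_graph E ->
  (forall T : {set 'I_n}, #|T| = 3 -> exists2 e, e \in E & e \subset T) ->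
  dominates 2 E (Bn n).
Proof.
Local Open Scope ring_scope.
move=> HE H3.
have cT : #|[set: 'I_n]| = n by rewrite cardsT card_ord.
have [y [_ _ spn]] := core HE H3 cT (leqnn (0 + n)).
rewrite cardsT card_ord in spn.
apply: (@stepA n E y) => v Hv.
pose cS (S : {set 'I_n}) := \sum_(i | enum_val i == S) v 0 i.
have key : forall p, inB 0 n p -> cS [set p.1; p.2] = 0.
  apply: (spn (fun a b => cS [set a; b])) => e eE _.
  have := congr1 (fun M : 'M[rat]_(1, #|E|) => M ord0 (enum_rank_in eE e)) Hv.
  rewrite /Mx !mxE => H.
  rewrite -[RHS]H.
  rewrite [RHS](partition_big (fun i => enum_val i) (fun S => S \in Bn n)) /=; last first.
    by move=> i _; exact: enum_valP.
  rewrite [RHS](eq_bigr (fun S => cS S * ent (Ynat y) S e)); last first.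
    move=> S _; rewrite /cS mulr_suml; apply: eq_bigr => i /eqP <-.
    by rewrite mxE (enum_rankK_in eE eE).
  rewrite /Bn big_imset /=; last first.
    move=> [a b] [a' b']; rewrite !inE /= => /andP[ab _] /andP[ab' _] eqs.
    have := enum2 ab; rewrite eqs (enum2 ab') => -[/val_inj -> /val_inj ->] //.
  apply: eq_bigl => p; rewrite /inB !inE.
  by apply/idP/idP => h; lia.
apply/rowP => i; rewrite mxE.
have /imsetP [p pD epi] := enum_valP i.
have := key p; rewrite -epi /cS (big_pred1 i) //; last first.
  by move=> i'; rewrite /= (inj_eq enum_val_inj).
by apply; move: pD; rewrite /inB !inE => h; lia.
Qed.
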